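(* Let $\hat M,M^\star\in\mathbb R^{(n_1+n_2)\times(m_1+m_2)}$ be partitioned into blocks $\hat M_{ij},M^\star_{ij}\in\mathbb R^{n_i\times m_j}$, $i,j\in\{1,2\}$. Suppose $\operatorname{rank}\hat M\le p$, $\operatorname{rank}M^\star=p$, $\sigma_p(M^\star_{11})>0$, and for all $(i,j)\ne(2,2)$, $\|\hat M_{ij}-M^\star_{ij}\|_F\le\epsilon$ and $\|M^\star_{ij}\|_F\le M$, where $\epsilon\le\sigma_p(M^\star_{11})/2$. Then $$\|\hat M_{22}-M^\star_{22}\|_F\le 8\epsilon\frac{M^2}{\sigma_p(M^\star_{11})^2}.$$
   Context: $\|\cdot\|_F$ is the Frobenius norm and $\sigma_p(A)$ denotes the $p$-th largest singular value of a matrix $A$. *)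

(* Defs.v *)
From HB Require Import structures.
From mathcomp Require Import all_boot all_order all_algebra.
From mathcomp Require Import reals.
From Stdlib Require Import ClassicalEpsilon.
Set Implicit Arguments. Unset Strict Implicit. Unset Printing Implicit Defensive.
Import Order.TTheory GRing.Theory Num.Theory.
Local Open Scope ring_scope.

Definition frob_norm (R : realType) (m n : nat) (A : 'M[R]_(m, n)) : R :=
  Num.sqrt (\sum_(i < m) \sum_(j < n) A i j ^+ 2).

Definition rect_diag (R : realType) (m n : nat) (s : nat -> R) : 'M[R]_(m, n) :=
  \matrix_(i < m, j < n) (if (i : nat) == (j : nat) then s (i : nat) else 0).

Definition is_singular_value_seq (R : realType) (m n : nat) (A : 'M[R]_(m, n))
    (s : nat -> R) : Prop :=
  [/\ (forall k, 0 <= s k),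
      (forall k l, (k <= l)%N -> s l <= s k),
      (forall k, (minn m n <= k)%N -> s k = 0) &
      exists (U : 'M[R]_m) (V : 'M[R]_n),
        [/\ U^T *m U = 1%:M, V^T *m V = 1%:M & A = U *m rect_diag m n s *m V^T]].

(* sigma_p(A): the p-th largest singular value (p counted from 1),
   i.e. s (p-1) for the singular value sequence s of A (which exists and is
   unique by the SVD theorem). *)
Definition sing_val (R : realType) (m n : nat) (p : nat) (A : 'M[R]_(m, n)) : R :=
  epsilon (inhabits 0)
    (fun x => exists s, is_singular_value_seq A s /\ x = s p.-1).

(* Main.v *)
Require Import Defs.
From HB Require Import structures.
From mathcomp Require Import all_boot all_order all_algebra.
From mathcomp Require Import reals.
From mathcomp Require Import complex spectral.
From mathcomp Require Import ring lra.
From Stdlib Require Import ClassicalEpsilon.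
Import Order.TTheory GRing.Theory Num.Theory.
Local Open Scope ring_scope.
Set Implicit Arguments. Unset Strict Implicit. Unset Printing Implicit Defensive.

Section P1.
Variable R : realType.

Lemma CS_sum (I : finType) (a b : I -> R) :
  (\sum_i a i * b i) ^+ 2 <= (\sum_i a i ^+ 2) * (\sum_i b i ^+ 2).
Proof.
set A := \sum_i a i ^+ 2; set B := \sum_i b i ^+ 2; set C := \sum_i a i * b i.
have A0 : 0 <= A by apply: sumr_ge0 => i _; exact: sqr_ge0.
have B0 : 0 <= B by apply: sumr_ge0 => i _; exact: sqr_ge0.
have E : \sum_i (A * b i - C * a i) ^+ 2 = A * (A * B - C ^+ 2).
  rewrite (eq_bigr (fun i => A^+2 * b i ^+ 2 - (2 * A * C) * (a i * b i) + C ^+ 2 * a i ^+ 2)); last first.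
    by move=> i _; ring.
  rewrite big_split /= sumrB -!mulr_sumr -/A -/B -/C; ring.
have : 0 <= A * (A * B - C ^+ 2) by rewrite -E; apply: sumr_ge0 => i _; exact: sqr_ge0.
have [Az|Ap] := eqVneq A 0.
  have az : forall i, a i = 0.
    move=> i; apply/eqP; rewrite -sqrf_eq0; apply/eqP.
    by move: Az; move/psumr_eq0P => -> // j _; exact: sqr_ge0.
  rewrite /C big1 ?expr0n //= ?subr0 ?mulr_ge0 // => i _; by rewrite az mul0r.
have Apos : 0 < A by rewrite lt_def Ap A0.
by rewrite pmulr_rge0 // subr_ge0.
Qed.
End P1.

Section P2.
Variable R : realType.
Implicit Types m n : nat.

Definition fr2 m n (A : 'M[R]_(m, n)) := \sum_i \sum_j A i j ^+ 2.

Lemma fr2_ge0 m n (A : 'M[R]_(m, n)) : 0 <= fr2 A.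
Proof. by apply: sumr_ge0 => i _; apply: sumr_ge0 => j _; exact: sqr_ge0. Qed.

Lemma frobE m n (A : 'M[R]_(m, n)) : frob_norm A = Num.sqrt (fr2 A).
Proof. by []. Qed.

Lemma frob_ge0 m n (A : 'M[R]_(m, n)) : 0 <= frob_norm A.
Proof. exact: sqrtr_ge0. Qed.

Lemma sqr_frob m n (A : 'M[R]_(m, n)) : frob_norm A ^+ 2 = fr2 A.
Proof. by rewrite frobE sqr_sqrtr // fr2_ge0. Qed.

Lemma fr2_pair m n (A : 'M[R]_(m, n)) :
  fr2 A = \sum_(k : 'I_m * 'I_n) A k.1 k.2 ^+ 2.
Proof. by rewrite /fr2 pair_big. Qed.

Lemma fr2_tr m n (A : 'M[R]_(m, n)) : fr2 A^T = fr2 A.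
Proof. by rewrite /fr2 exchange_big; apply: eq_bigr => i _; apply: eq_bigr => j _; rewrite mxE. Qed.

Lemma frob_tr m n (A : 'M[R]_(m, n)) : frob_norm A^T = frob_norm A.
Proof. by rewrite !frobE fr2_tr. Qed.

Lemma fr2_eq0 m n (A : 'M[R]_(m, n)) : fr2 A = 0 -> A = 0.
Proof.
rewrite fr2_pair => /psumr_eq0P H; apply/matrixP => i j; rewrite mxE.
apply/eqP; rewrite -sqrf_eq0; apply/eqP.
by apply: (H _ (i, j)) => // k _; exact: sqr_ge0.
Qed.

Lemma fr2N m n (A : 'M[R]_(m, n)) : fr2 (- A) = fr2 A.
Proof. by apply: eq_bigr => i _; apply: eq_bigr => j _; rewrite mxE sqrrN. Qed.

Lemma frobN m n (A : 'M[R]_(m, n)) : frob_norm (- A) = frob_norm A.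
Proof. by rewrite !frobE fr2N. Qed.

Lemma le_sqrt_of_sqr (x y : R) : x ^+ 2 <= y -> x <= Num.sqrt y.
Proof.
move=> h; apply: (le_trans (ler_norm x)); rewrite -sqrtr_sqr.
exact: ler_wsqrtr.
Qed.

Lemma frobD m n (A B : 'M[R]_(m, n)) :
  frob_norm (A + B) <= frob_norm A + frob_norm B.
Proof.
rewrite [X in X <= _]frobE; rewrite -(ger0_norm (addr_ge0 (frob_ge0 A) (frob_ge0 B))).
rewrite -sqrtr_sqr; apply: ler_wsqrtr.
set d := \sum_(k : 'I_m * 'I_n) A k.1 k.2 * B k.1 k.2.
have e : fr2 (A + B) = fr2 A + 2 * d + fr2 B.
  rewrite !fr2_pair /d mulr_sumr -!big_split /=; apply: eq_bigr => k _.
  rewrite mxE; ring.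
have hd : d <= frob_norm A * frob_norm B.
  rewrite !frobE -sqrtrM ?fr2_ge0 //; apply: le_sqrt_of_sqr.
  rewrite !fr2_pair; exact: CS_sum.
rewrite e sqrrD !sqr_frob; lra.
Qed.

Lemma frobB m n (A B : 'M[R]_(m, n)) :
  frob_norm (A - B) <= frob_norm A + frob_norm B.
Proof. by rewrite -(frobN B); exact: frobD. Qed.

Lemma fr2M m n k (A : 'M[R]_(m, n)) (B : 'M[R]_(n, k)) :
  fr2 (A *m B) <= fr2 A * fr2 B.
Proof.
rewrite /fr2 mulr_suml; apply: ler_sum => i _.
rewrite [X in _ <= _ * X]exchange_big /= mulr_sumr; apply: ler_sum => l _.
rewrite mxE; exact: CS_sum.
Qed.

Lemma frobM m n k (A : 'M[R]_(m, n)) (B : 'M[R]_(n, k)) :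
  frob_norm (A *m B) <= frob_norm A * frob_norm B.
Proof. by rewrite !frobE -sqrtrM ?fr2_ge0 //; apply: ler_wsqrtr; exact: fr2M. Qed.

Lemma fr2_trace m n (A : 'M[R]_(m, n)) : fr2 A = \tr (A *m A^T).
Proof.
rewrite /mxtrace /fr2; apply: eq_bigr => i _; rewrite mxE.
by apply: eq_bigr => j _; rewrite mxE expr2.
Qed.

Lemma fr2_orthr m n k (A : 'M[R]_(m, n)) (V : 'M[R]_(n, k)) :
  V *m V^T = 1%:M -> fr2 (A *m V) = fr2 A.
Proof.
by move=> hV; rewrite !fr2_trace trmx_mul mulmxA -(mulmxA A) hV mulmx1.
Qed.

Lemma fr2_orthl m n k (A : 'M[R]_(m, n)) (W : 'M[R]_(k, m)) :
  W^T *m W = 1%:M -> fr2 (W *m A) = fr2 A.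
Proof.
by move=> hW; rewrite -fr2_tr trmx_mul fr2_orthr ?trmxK // fr2_tr.
Qed.

Lemma orth_sym n (U : 'M[R]_n) : U^T *m U = 1%:M -> U *m U^T = 1%:M.
Proof. by move=> h; apply: mulmx1C. Qed.

Definition sel m p : 'M[R]_(m, p) := \matrix_(i, j) ((i : nat) == (j : nat))%:R.

Lemma mul_sel_entry m n p (A : 'M[R]_(m, n)) (hp : (p <= n)%N) i j :
  (A *m sel n p) i j = A i (widen_ord hp j).
Proof.
rewrite mxE (bigD1 (widen_ord hp j)) //= mxE eqxx mulr1 big1 ?addr0 // => k hk.
rewrite mxE; case: eqP => [e|]; last by rewrite mulr0.
by case/eqP: hk; apply: val_inj.
Qed.

Lemma sum_widen_le n p (hp : (p <= n)%N) (g : 'I_n -> R) :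
  (forall k, 0 <= g k) -> \sum_(j < p) g (widen_ord hp j) <= \sum_(k < n) g k.
Proof.
move=> g0; move: hp g g0; case: n => [|n] hp g g0.
  by rewrite big1 ?big_ord0 // => j; have := leq_trans (ltn_ord j) hp.
have -> : \sum_(j < p) g (widen_ord hp j) = \sum_(j < p) (fun l => g (inord l)) j.
  by apply: eq_bigr => j _; congr g; apply: val_inj; rewrite /= inordK // (leq_trans (ltn_ord j) hp).
rewrite (big_ord_widen n.+1 (fun l => g (inord l)) hp) /=.
rewrite [X in _ <= X](bigID (fun k : 'I_n.+1 => (k < p)%N)) /= ler_wpDr //.
  by apply: sumr_ge0.
by apply: ler_sum => k _; rewrite inord_val.
Qed.

Lemma fr2_sel m n p (A : 'M[R]_(m, n)) : (p <= n)%N -> fr2 (A *m sel n p) <= fr2 A.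
Proof.
move=> hp; apply: ler_sum => i _.
under eq_bigr do rewrite (mul_sel_entry _ hp).
have := @sum_widen_le _ _ hp (fun k => A i k ^+ 2) (fun k => sqr_ge0 _); exact.
Qed.

Lemma sel_orth n p : (p <= n)%N -> (sel n p)^T *m sel n p = 1%:M.
Proof.
move=> hp; apply/matrixP => i j; rewrite -(trmxK (_ *m _)) trmx_mul trmxK mxE.
rewrite mul_sel_entry !mxE /=; by [].
Qed.
End P2.

Section P3.
Variable F : fieldType.

Lemma schur_zero (a b c d p : nat) (X : 'M[F]_(a + b, c + d))
    (L : 'M[F]_(p, a)) (Q : 'M[F]_(c, p)) :
  (\rank X <= p)%N -> (L *m ulsubmx X *m Q) \in unitmx ->
  drsubmx X = dlsubmx X *m Q *m invmx (L *m ulsubmx X *m Q) *m (L *m ursubmx X).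
Proof.
move=> rX uK; set K := L *m ulsubmx X *m Q.
set Y := col_mx (row_mx K (L *m ursubmx X)) (row_mx (dlsubmx X *m Q) (drsubmx X)).
have eY : Y = block_mx L 0 0 1%:M *m X *m block_mx Q 0 0 1%:M.
  rewrite -[in RHS](submxK X) !mulmx_block !mul0mx !mulmx0 !mul1mx !mulmx1 !addr0 !add0r.
  by rewrite /Y /block_mx /K.
have rY : (\rank Y <= p)%N.
  by rewrite eY (leq_trans (mxrankM_maxl _ _)) // (leq_trans (mxrankM_maxr _ _)).
set U := row_mx K (L *m ursubmx X); set D := row_mx (dlsubmx X *m Q) (drsubmx X).
have rU : (p <= \rank U)%N.
  have hK : \rank K = p by rewrite mxrank_unit.
  have eK : K = U *m col_mx 1%:M 0 by rewrite mul_row_col mulmx1 mulmx0 addr0.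
  by have := mxrankM_maxl U (col_mx (1%:M : 'M[F]_p) (0 : 'M_(d, p))); rewrite -eK hK.
have sUY : (U <= Y)%MS by rewrite /Y -addsmxE addsmxSl.
have sYU : (Y <= U)%MS.
  by rewrite -(mxrank_leqif_sup sUY).2 eqn_leq mxrankS //= (leq_trans rY rU).
have sDU : (D <= U)%MS by apply: submx_trans sYU; rewrite /Y -addsmxE addsmxSr.
case/submxP: sDU => W eW.
move: eW; rewrite /D /U mul_mx_row => /eq_row_mx [e1 e2].
rewrite e2 e1 -(mulmxA W K) mulmxV // mulmx1.
by rewrite mulmxA.
Qed.
End P3.

Section P4.
Variable R : realType.
Local Notation C := R[i].
Local Notation toC := (real_complex R).

Lemma ReD (x y : C) : complex.Re (x + y) = complex.Re x + complex.Re y. Proof. by case: x => ? ?; case: y => ? ?. Qed.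
Lemma ImD (x y : C) : complex.Im (x + y) = complex.Im x + complex.Im y. Proof. by case: x => ? ?; case: y => ? ?. Qed.
Lemma Re0 : complex.Re (0 : C) = 0. Proof. by []. Qed.
Lemma Im0 : complex.Im (0 : C) = 0. Proof. by []. Qed.
Lemma ReMr (z : C) (x : R) : complex.Re (z * toC x) = complex.Re z * x.
Proof. by case: z => a b /=; rewrite mulr0 subr0. Qed.
Lemma ImMr (z : C) (x : R) : complex.Im (z * toC x) = complex.Im z * x.
Proof. by case: z => a b /=; rewrite mulr0 add0r mulrC. Qed.
Lemma ReMl (z : C) (x : R) : complex.Re (toC x * z) = x * complex.Re z.
Proof. by rewrite mulrC ReMr mulrC. Qed.
Lemma ImMl (z : C) (x : R) : complex.Im (toC x * z) = x * complex.Im z.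
Proof. by rewrite mulrC ImMr mulrC. Qed.

Lemma Re_mulmx k l (r : 'rV[C]_k) (S : 'M[R]_(k, l)) :
  map_mx (@complex.Re R) (r *m map_mx toC S) = map_mx (@complex.Re R) r *m S.
Proof.
apply/matrixP => i j; rewrite !mxE (big_morph (@complex.Re R) ReD Re0).
by apply: eq_bigr => k0 _; rewrite !mxE ReMr.
Qed.
Lemma Im_mulmx k l (r : 'rV[C]_k) (S : 'M[R]_(k, l)) :
  map_mx (@complex.Im R) (r *m map_mx toC S) = map_mx (@complex.Im R) r *m S.
Proof.
apply/matrixP => i j; rewrite !mxE (big_morph (@complex.Im R) ImD Im0).
by apply: eq_bigr => k0 _; rewrite !mxE ImMr.
Qed.

Lemma real_toC (z : C) : z \is Num.real -> z = toC (complex.Re z).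
Proof. by case: z => a b; rewrite complex_real => /eqP ->. Qed.

Lemma sym_maxeig n (S : 'M[R]_n.+1) : S^T = S ->
  exists l : R, exists v : 'rV[R]_n.+1,
   [/\ v != 0, v *m S = l *: v,
       (forall mu (w : 'rV[R]_n.+1), w != 0 -> w *m S = mu *: w -> mu <= l) &
       \tr S <= n.+1%:R * l].
Proof.
move=> Ssym.
set SC := map_mx toC S.
have hS : SC \is hermsymmx.
  apply: realsym_hermsym.
    apply/is_hermitianmxP; rewrite expr0 scale1r map_mx_id // /SC map_trmx Ssym.
    by [].
  by apply/mxOverP => i j; rewrite mxE complex_real.
have nS := hermitian_normalmx hS.
have /orthomx_spectralP eS := nS.
set P := spectralmx SC in eS; set d := spectral_diag SC in eS.
have PU : P \in unitmx by exact: spectral_unit.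
have dR := hermitian_spectral_diag_real hS.
have dE : forall j, d 0 j = toC (complex.Re (d 0 j)).
  by move=> j; apply: real_toC; exact: (mxOverP dR).
pose lam j := complex.Re (d 0 j).
have [j0 _ Hj0] := @arg_maxP _ R _ (ord0 : 'I_n.+1) predT lam isT.
have PS : P *m SC = diag_mx d *m P.
  by rewrite {1}eS !mulmxA mulmxV // mul1mx.
have Hmax : forall mu (w : 'rV[R]_n.+1), w != 0 -> w *m S = mu *: w -> mu <= lam j0.
  move=> mu w wn0 ew.
  set wC := map_mx toC w.
  have ewC : wC *m SC = toC mu *: wC by rewrite -map_mxM ew map_mxZ.
  set q := wC *m invmx P.
  have eqq : q *m diag_mx d = toC mu *: q.
    have -> : q *m diag_mx d = (wC *m SC) *m invmx P by rewrite eS /q !mulmxA mulmxK.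
    by rewrite ewC -scalemxAl.
  have qn0 : q != 0.
    apply: contraNneq wn0 => q0.
    have : wC = q *m P by rewrite /q mulmxKV.
    rewrite q0 mul0mx => /matrixP h; apply/eqP/matrixP => i k; have := h i k.
    by rewrite !mxE => /complexI.
  have [j hj] : exists j, q 0 j != 0.
    apply/existsP; apply: contraR qn0 => /existsPn H; apply/eqP/matrixP => i k.
    by rewrite ord1 [RHS]mxE; apply/eqP; have := H k; rewrite negbK.
  have := congr1 (fun M : 'rV[C]_n.+1 => M 0 j) eqq; rewrite /= mul_mx_diag [LHS]mxE [RHS]mxE => e.
  have : d 0 j = toC mu.
    by apply: (mulfI hj); rewrite e mulrC.
  by rewrite dE => /complexI <-; exact: Hj0.
exists (lam j0).
set r := row j0 P.
have er : r *m SC = d 0 j0 *: r.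
  by rewrite /r -row_mul PS row_mul row_diag_mx -scalemxAl -rowE.
have rn0 : r != 0.
  apply/negP => /eqP r0.
  have : (delta_mx 0 j0 : 'rV[C]_n.+1) = 0.
    by rewrite -[LHS](mulmxK PU) -rowE -/r r0 mul0mx.
  move/matrixP => /(_ 0 j0); rewrite !mxE !eqxx /= => /eqP; by rewrite oner_eq0.
have eRe : map_mx (@complex.Re R) r *m S = lam j0 *: map_mx (@complex.Re R) r.
  rewrite -Re_mulmx er; apply/matrixP => i k; rewrite !mxE dE ReMl //.
have eIm : map_mx (@complex.Im R) r *m S = lam j0 *: map_mx (@complex.Im R) r.
  rewrite -Im_mulmx er; apply/matrixP => i k; rewrite !mxE dE ImMl //.
have trE : \tr S = \sum_j lam j.
  apply: complexI; rewrite -trace_map_mx -/SC eS mxtrace_mulC mulmxA mulmxV // mul1mx.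
  rewrite mxtrace_diag rmorph_sum; apply: eq_bigr => j _; exact: dE.
have trle : \tr S <= n.+1%:R * lam j0.
  rewrite trE; apply: le_trans (_ : \sum_(j < n.+1) lam j0 <= _).
    by apply: ler_sum => j _; exact: Hj0.
  by rewrite sumr_const card_ord mulr_natl.
have [re0|ren0] := eqVneq (map_mx (@complex.Re R) r) 0.
  exists (map_mx (@complex.Im R) r); split => //.
  apply: contraNneq rn0 => im0; apply/eqP/matrixP => i k.
  move/matrixP: re0 => /(_ i k); move/matrixP: im0 => /(_ i k); rewrite !mxE.
  by case: (P _ _) => a b /= -> ->.
by exists (map_mx (@complex.Re R) r); split.
Qed.
End P4.

Section P5.
Variable R : realType.

Definition e0 n : 'rV[R]_(1 + n) := row_mx 1%:M 0.

Lemma e0e0 n : e0 n *m (e0 n)^T = 1%:M.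
Proof. by rewrite /e0 tr_row_mx mul_row_col trmx1 trmx0 mulmx1 mulmx0 addr0. Qed.

Lemma sqsum_eq0 n (y : 'rV[R]_n) : (y *m y^T) 0 0 = 0 -> y = 0.
Proof.
rewrite mxE => /psumr_eq0P H; apply/matrixP => i j; rewrite ord1 !mxE.
apply/eqP; rewrite -sqrf_eq0 expr2; apply/eqP.
have H0 : forall k : 'I_n, true -> 0 <= y 0 k * y^T k 0 by move=> k _; rewrite mxE -expr2 sqr_ge0.
by have := H H0 j isT; rewrite mxE.
Qed.

Lemma house_ex n (x : 'rV[R]_(1 + n)) : x *m x^T = 1%:M ->
  exists H : 'M[R]_(1 + n), [/\ H^T = H, H *m H = 1%:M & e0 n *m H = x].
Proof.
move=> xx.
set y := e0 n - x.
set c := (y *m y^T) 0 0.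
set k := 2 / c.
pose H : 'M[R]_(1 + n) := 1%:M - k *: (y^T *m y).
have yy : y *m y^T = c%:M by apply: mx11_scalar.
have kc : k ^+ 2 * c = 2 * k.
  rewrite /k; have [->|cn0] := eqVneq c 0; first by rewrite invr0 !mulr0.
  by field.
exists H; split.
- by rewrite /H linearB /= trmx1 linearZ /= trmx_mul trmxK.
- have YY : (y^T *m y) *m (y^T *m y) = c *: (y^T *m y).
    by rewrite mulmxA -(mulmxA _ y) yy mul_mx_scalar -scalemxAl.
  rewrite /H; move: YY; set Y := y^T *m y => YY.
  rewrite mulmxBl mul1mx (mulmxBr (k *: Y)) mulmx1 -scalemxAl -scalemxAr YY !scalerA.
  have -> : k * k * c = k *+ 2 by rewrite -expr2 kc mulr_natl.
  rewrite -scalerMnl; set Z := k *: Y.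
  have -> : Z - Z *+ 2 = - Z by rewrite mulr2n opprD addrA subrr sub0r.
  by rewrite opprK subrK.
- set a := (e0 n *m x^T) 0 0.
  have xe : x *m (e0 n)^T = a%:M.
    by rewrite -[x *m _]trmxK trmx_mul trmxK [e0 n *m x^T]mx11_scalar tr_scalar_mx.
  have ey : e0 n *m y^T = (1 - a)%:M.
    by rewrite /y linearB /= mulmxBr e0e0 [e0 n *m x^T]mx11_scalar -/a raddfB.
  have cE : c = 2 * (1 - a).
    rewrite /c /y linearB /= mulmxBr !mulmxBl e0e0 xx xe [e0 n *m x^T]mx11_scalar -/a.
    rewrite !mxE !mulr1n; ring.
  rewrite /H mulmxBr mulmx1 -scalemxAr mulmxA ey mul_scalar_mx scalerA.
  have [c0|cn0] := eqVneq c 0.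
    have y0 := sqsum_eq0 (c0 : (y *m y^T) 0 0 = 0).
    by rewrite /k c0 invr0 mulr0 mul0r scale0r subr0; move: y0; rewrite /y => /eqP; rewrite subr_eq0 => /eqP.
  have -> : k * (1 - a) = 1 by rewrite /k cE; field; move: cn0; rewrite cE; apply: contraNneq => ->; rewrite mulr0.
  by rewrite scale1r /y opprB addrC subrK.
Qed.
End P5.

Section P6.
Variable R : realType.

Lemma rect_diag_block m n (s : nat -> R) :
  rect_diag (1 + m) (1 + n) s =
  block_mx (s 0%N)%:M 0 0 (rect_diag m n (fun k => s k.+1)).
Proof.
apply/matrixP => i j.
rewrite -(splitK i) -(splitK j); case: (split i) => i0; case: (split j) => j0 /=.
- by rewrite block_mxEul !mxE !ord1.
- by rewrite block_mxEur !mxE ord1.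
- by rewrite block_mxEdl !mxE ord1.
- by rewrite block_mxEdr !mxE /= eqSS.
Qed.

Lemma svd0 m n : is_singular_value_seq (0 : 'M[R]_(m, n)) (fun _ => 0).
Proof.
split => //; exists 1%:M, 1%:M; split; rewrite ?trmx1 ?mulmx1 //.
by rewrite mul1mx; apply/matrixP => i j; rewrite !mxE; case: eqP.
Qed.

Lemma svd_top_eig m n (A : 'M[R]_(m, n)) s :
  is_singular_value_seq A s -> 0 < s 0%N ->
  exists w : 'rV[R]_n, w != 0 /\ w *m (A^T *m A) = s 0%N ^+ 2 *: w.
Proof.
case=> s0 smono sz [U [V [UU VV eA]]] sp.
case: m A U UU eA sz => [|m] A U UU eA sz.
  by move: sp; rewrite sz ?ltxx // min0n.
case: n A V VV eA sz => [|n] A V VV eA sz.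
  by move: sp; rewrite sz ?ltxx // minn0.
set D := rect_diag m.+1 n.+1 s.
have hD1 : delta_mx 0 0 *m D^T = s 0%N *: (delta_mx 0 0 : 'rV[R]_m.+1).
  apply/matrixP => i j; rewrite -rowE !mxE ord1 /=.
  by case: j => [[|j] hj]; rewrite ?mulr1 ?mulr0.
have hD2 : delta_mx 0 0 *m D = s 0%N *: (delta_mx 0 0 : 'rV[R]_n.+1).
  apply/matrixP => i j; rewrite -rowE !mxE ord1 /=.
  by case: j => [[|j] hj]; rewrite ?mulr1 ?mulr0.
exists (delta_mx 0 0 *m V^T); split.
  apply/negP => /eqP w0.
  have : (delta_mx 0 0 : 'rV[R]_n.+1) *m V^T *m V = 0 by rewrite w0 mul0mx.
  rewrite -mulmxA VV mulmx1 => /matrixP /(_ 0 0); rewrite !mxE !eqxx /= => /eqP.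
  by rewrite oner_eq0.
rewrite eA !trmx_mul !trmxK.
have -> : V *m (D^T *m U^T) *m (U *m D *m V^T) = V *m (D^T *m D) *m V^T.
  by rewrite !mulmxA -(mulmxA _ U^T U) UU mulmx1.
rewrite !mulmxA -(mulmxA _ V^T V) VV mulmx1 hD1 -!scalemxAl hD2 -scalemxAl scalerA -expr2.
by rewrite scalemxAl.
Qed.
End P6.

Section P7.
Variable R : realType.

Lemma e0_usub m k (M : 'M[R]_(1 + m, k)) : e0 R m *m M = usubmx M.
Proof. by rewrite -{1}[M]vsubmxK /e0 mul_row_col mul1mx mul0mx addr0. Qed.

Lemma e0_lsub m k (M : 'M[R]_(k, 1 + m)) : M *m (e0 R m)^T = lsubmx M.
Proof.
by rewrite -{1}[M]hsubmxK /e0 tr_row_mx trmx1 trmx0 mul_row_col mulmx1 mulmx0 addr0.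
Qed.

Lemma svd_step m n (A : 'M[R]_(1 + m, 1 + n)) :
  (forall (A' : 'M[R]_(m, n)), exists s, is_singular_value_seq A' s) ->
  A != 0 -> exists s, is_singular_value_seq A s.
Proof.
move=> IH An0.
set S := A^T *m A.
have Ssym : S^T = S by rewrite /S trmx_mul trmxK.
have [l [v0 [v0n0 ev0 lmax trS]]] := sym_maxeig Ssym.
have frA : 0 < fr2 A.
  rewrite lt_def fr2_ge0 andbT; apply/eqP => h; move/eqP: An0; apply; exact: fr2_eq0 h.
have trSE : \tr S = fr2 A by rewrite -fr2_tr fr2_trace trmxK.
have lpos : 0 < l.
  have h : 0 < n.+1%:R * l by rewrite -trSE in frA; exact: lt_le_trans frA trS.
  by rewrite pmulr_rgt0 ?ltr0Sn in h.
set nv := (v0 *m v0^T) 0 0.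
have nvpos : 0 < nv.
  rewrite lt_def; apply/andP; split.
    by apply: contraNneq v0n0 => h; apply/eqP; exact: sqsum_eq0 h.
  by rewrite /nv mxE; apply: sumr_ge0 => j _; rewrite mxE -expr2 sqr_ge0.
set v := (Num.sqrt nv)^-1 *: v0.
have vv : v *m v^T = 1%:M.
  rewrite /v linearZ /= -scalemxAl -scalemxAr scalerA [v0 *m v0^T]mx11_scalar -/nv.
  rewrite -scalemx1 scalerA -expr2 exprVn sqr_sqrtr ?ltW // mulVf ?scale1r //.
  by rewrite gt_eqF.
have ev : v *m S = l *: v by rewrite /v -scalemxAl ev0 !scalerA mulrC.
set sig := Num.sqrt l.
have sigpos : 0 < sig by rewrite sqrtr_gt0.
have sig2 : sig ^+ 2 = l by rewrite sqr_sqrtr ?ltW.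
set u := sig^-1 *: (v *m A^T).
have uu : u *m u^T = 1%:M.
  rewrite /u linearZ /= -scalemxAl -scalemxAr scalerA trmx_mul trmxK.
  rewrite mulmxA -(mulmxA v) -/S ev -scalemxAl vv scalerA -expr2 exprVn sig2 mulVf ?scale1r //.
  by rewrite gt_eqF.
have Av : A *m v^T = sig *: u^T.
  rewrite /u [in RHS]linearZ /= trmx_mul trmxK scalerA divff ?scale1r //; by rewrite gt_eqF.
have uA : u *m A = sig *: v.
  rewrite /u -scalemxAl -mulmxA -/S ev scalerA -sig2 expr2 mulrA mulVf ?mul1r //.
  by rewrite gt_eqF.
clearbody u v.
have [Hu [HuT HuH eHu]] := house_ex uu.
have [Hv [HvT HvH eHv]] := house_ex vv.
set B := Hu *m A *m Hv.
have eB1 : usubmx B = sig *: e0 R n.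
  by rewrite -e0_usub /B !mulmxA eHu uA -scalemxAl -eHv -mulmxA HvH mulmx1.
have He : Hv *m (e0 R n)^T = v^T by rewrite -eHv trmx_mul HvT.
have Hu' : Hu *m u^T = (e0 R m)^T by rewrite -eHu trmx_mul HuT mulmxA HuH mul1mx.
have eB2 : lsubmx B = sig *: (e0 R m)^T.
  by rewrite -e0_lsub /B -!mulmxA He Av -scalemxAr Hu'.
set A' := drsubmx B.
have eB : B = block_mx (sig%:M : 'M_1) 0 0 A'.
  rewrite -[B]submxK /A'; congr block_mx.
  - by rewrite /ulsubmx eB1 /e0 scale_row_mx row_mxKl scalemx1.
  - by rewrite /ursubmx eB1 /e0 scale_row_mx row_mxKr scaler0.
  - have dl : dlsubmx B = dsubmx (lsubmx B) by apply/matrixP => i j; rewrite !mxE.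
    by rewrite dl eB2 /e0 tr_row_mx trmx1 trmx0 scale_col_mx col_mxKd scaler0.
have eA : A = Hu *m B *m Hv.
  by rewrite /B !mulmxA HuH mul1mx -mulmxA HvH mulmx1.
clearbody A' B.
have [s' hs'] := IH A'.
have hs'c := hs'.
case: hs' => s'0 s'mono s'z [U' [V' [UU' VV' eA']]].
have s'le : s' 0%N <= sig.
  have [s'p|s'n] := ltP 0 (s' 0%N); last by apply: le_trans s'n _; exact: ltW.
  have [w [wn0 ew]] := svd_top_eig hs'c s'p.
  set z := row_mx (0 : 'rV[R]_1) w.
  have zn0 : z != 0.
    apply: contraNneq wn0 => z0; rewrite -(row_mxKr (0 : 'rV[R]_1) w) -/z z0.
    by apply/eqP/matrixP => i j; rewrite !mxE.
  have BB : B^T *m B = block_mx ((sig ^+ 2)%:M : 'M_1) 0 0 (A'^T *m A').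
    rewrite eB tr_block_mx tr_scalar_mx !trmx0 mulmx_block !mul0mx !mulmx0 !addr0 !add0r.
    by rewrite mul_scalar_mx scale_scalar_mx expr2.
  have zBB : z *m (B^T *m B) = s' 0%N ^+ 2 *: z.
    by rewrite BB /z mul_row_block !mul0mx !mulmx0 !addr0 add0r ew scale_row_mx scaler0.
  have SE : S = Hv *m (B^T *m B) *m Hv.
    rewrite /S eA !trmx_mul HuT HvT !mulmxA -(mulmxA _ Hu Hu) HuH mulmx1.
    by [].
  set y := z *m Hv.
  have yn0 : y != 0.
    apply: contraNneq zn0 => y0; by rewrite -(mulmx1 z) -HvH mulmxA -/y y0 mul0mx.
  have ey : y *m S = s' 0%N ^+ 2 *: y.
    rewrite SE /y !mulmxA -(mulmxA z Hv Hv) HvH mulmx1 -(mulmxA z B^T B) zBB.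
    by rewrite -scalemxAl.
  have := lmax _ _ yn0 ey => h.
  exact: le_sqrt_of_sqr h.
exists (fun k => if k is j.+1 then s' j else sig).
split.
- by case=> [|k] /=; [exact: ltW | exact: s'0].
- move=> [|k] [|l'] //= hkl.
  + by apply: le_trans s'le; exact: s'mono.
  + exact: s'mono.
- move=> [|k] /=; first by rewrite minnSS.
  by rewrite minnSS ltnS; exact: s'z.
exists (Hu *m block_mx 1%:M 0 0 U'), (Hv *m block_mx 1%:M 0 0 V'); split.
- rewrite trmx_mul HuT mulmxA -(mulmxA _ Hu Hu) HuH mulmx1 tr_block_mx trmx1 !trmx0.
  rewrite mulmx_block !mul0mx !mulmx0 !mul1mx !addr0 !add0r UU'.
  by symmetry; exact: (@scalar_mx_block _ 1 m 1).
- rewrite trmx_mul HvT mulmxA -(mulmxA _ Hv Hv) HvH mulmx1 tr_block_mx trmx1 !trmx0.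
  rewrite mulmx_block !mul0mx !mulmx0 !mul1mx !addr0 !add0r VV'.
  by symmetry; exact: (@scalar_mx_block _ 1 n 1).
rewrite rect_diag_block /= trmx_mul HvT tr_block_mx trmx1 !trmx0.
rewrite {1}eA eB eA' -!mulmxA; congr (Hu *m _); rewrite !mulmxA; congr (_ *m Hv).
rewrite !mulmx_block !mul0mx !mulmx0 !mul1mx !mulmx1 !addr0 !add0r.
by rewrite mul0mx.
Qed.

End P7.

Section P8.
Variable R : realType.

Lemma svd_ex m n (A : 'M[R]_(m, n)) : exists s, is_singular_value_seq A s.
Proof.
elim: m n A => [|m IH] n A.
  by exists (fun=> 0); rewrite [A]flatmx0; exact: svd0.
case: n A => [|n] A.
  by exists (fun=> 0); rewrite [A]thinmx0; exact: svd0.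
have [->|An0] := eqVneq A 0; first by exists (fun=> 0); exact: svd0.
exact: (@svd_step R m n A (fun A' => IH n A') An0).
Qed.

Lemma sing_val_spec p m n (A : 'M[R]_(m, n)) :
  exists s, is_singular_value_seq A s /\ sing_val p A = s p.-1.
Proof.
have [s hs] := svd_ex A.
have := @epsilon_spec R (inhabits 0)
  (fun x => exists s, is_singular_value_seq A s /\ x = s p.-1) (ex_intro _ (s p.-1) (ex_intro _ s (conj hs erefl))).
by rewrite -/(sing_val p A).
Qed.

Lemma fr2_0 m n : fr2 (0 : 'M[R]_(m, n)) = 0.
Proof. by rewrite /fr2 big1 // => i _; rewrite big1 // => j _; rewrite mxE expr0n. Qed.

Lemma frob0 m n : frob_norm (0 : 'M[R]_(m, n)) = 0.
Proof. by rewrite frobE fr2_0 sqrtr0. Qed.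

Lemma frob_eq0 m n (A : 'M[R]_(m, n)) : frob_norm A = 0 -> A = 0.
Proof.
rewrite frobE => /eqP; rewrite sqrtr_eq0 => h; apply: fr2_eq0.
by apply/eqP; rewrite eq_le h fr2_ge0.
Qed.

Lemma lowbound_inv p (K : 'M[R]_p) (c : R) : 0 < c ->
  (forall k (Y : 'M[R]_(k, p)), c * frob_norm Y <= frob_norm (Y *m K)) ->
  K \in unitmx /\
  (forall k (X : 'M[R]_(k, p)), frob_norm (X *m invmx K) <= c^-1 * frob_norm X).
Proof.
move=> cpos H.
have ku : K \in unitmx.
  have h := H _ (kermx K); rewrite mulmx_ker frob0 in h.
  have h0 : frob_norm (kermx K) = 0.
    apply/eqP; rewrite eq_le frob_ge0 andbT.
    by rewrite -(pmulr_rle0 _ cpos).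
  by rewrite -row_free_unit -kermx_eq0; apply/eqP; exact: frob_eq0.
split => // k X.
have := H _ (X *m invmx K); rewrite -mulmxA mulVmx // mulmx1 => h.
by rewrite ler_pdivlMl.
Qed.

Lemma frob_contr_r m n p (X : 'M[R]_(m, n)) (V : 'M[R]_n) :
  V^T *m V = 1%:M -> (p <= n)%N -> frob_norm (X *m (V *m sel R n p)) <= frob_norm X.
Proof.
move=> VV hp; rewrite !frobE; apply: ler_wsqrtr.
rewrite mulmxA; apply: le_trans (fr2_sel _ hp) _.
by rewrite fr2_orthr // orth_sym.
Qed.

Lemma frob_contr_l m n p (X : 'M[R]_(m, n)) (U : 'M[R]_m) :
  U^T *m U = 1%:M -> (p <= m)%N -> frob_norm ((U *m sel R m p)^T *m X) <= frob_norm X.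
Proof.
move=> UU hp; rewrite -frob_tr trmx_mul trmxK -(frob_tr X).
exact: frob_contr_r.
Qed.

Lemma fr2_1 p : fr2 (1%:M : 'M[R]_p) = p%:R.
Proof.
rewrite /fr2 (eq_bigr (fun _ => 1)); first by rewrite sumr_const card_ord.
move=> i _; rewrite (bigD1 i) //= big1 ?addr0 => [|j hj]; first by rewrite mxE eqxx expr1n.
by rewrite mxE eq_sym (negbTE hj) expr0n.
Qed.
End P8.

Lemma final_arith (R : realType) (x s M : R) : 0 < s -> s <= M -> 0 <= x -> x <= s/2 ->
  2*x*(x+M)*s + 2*M*x*s + 2*M^+2*x <= 8*x*M^+2.
Proof. move=> s0 sM x0 xs.
have h1 : 0 <= x * s * (s/2 - x) by rewrite !mulr_ge0 ?subr_ge0 // ltW.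
have h3 : 0 <= x * (M - s) * (M + s) by rewrite !mulr_ge0 ?subr_ge0 // addr_ge0 // ltW // (lt_le_trans s0 sM).
have h2 : 0 <= x * (M - s) * M by rewrite !mulr_ge0 ?subr_ge0 // ltW // (lt_le_trans s0 sM).
have h4 : 0 <= x * M * M by rewrite !mulr_ge0 // ltW // (lt_le_trans s0 sM).
nra. Qed.

Lemma telesc3 (V : zmodType) (x z w y : V) : x - z + (z - w) + (w - y) = x - y.
Proof. by rewrite [x - z + _]addrA subrK addrA subrK. Qed.

Theorem mainTheorem3 (R : realType) (n1 n2 m1 m2 p : nat)
    (Mhat Mstar : 'M[R]_(n1 + n2, m1 + m2)) (eps M : R) :
  (0 < p)%N ->
  (\rank Mhat <= p)%N ->
  \rank Mstar = p ->
  0 < sing_val p (ulsubmx Mstar) ->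
  frob_norm (ulsubmx Mhat - ulsubmx Mstar) <= eps ->
  frob_norm (ursubmx Mhat - ursubmx Mstar) <= eps ->
  frob_norm (dlsubmx Mhat - dlsubmx Mstar) <= eps ->
  frob_norm (ulsubmx Mstar) <= M ->
  frob_norm (ursubmx Mstar) <= M ->
  frob_norm (dlsubmx Mstar) <= M ->
  eps <= sing_val p (ulsubmx Mstar) / 2 ->
  frob_norm (drsubmx Mhat - drsubmx Mstar)
    <= 8 * eps * (M ^+ 2 / sing_val p (ulsubmx Mstar) ^+ 2).
Proof.
move=> p0 rkh rks sp h11 h12 h21 M11 M12 M21 he.
have [s [[s0 smono sz [U [V [UU VV eA]]]] sE]] := sing_val_spec p (ulsubmx Mstar).
rewrite sE in sp he *.
set sig := s p.-1 in sp he *.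
have hpmin : (p <= minn n1 m1)%N.
  rewrite leqNgt; apply/negP => h; move: sp; rewrite /sig sz ?ltxx //.
  by rewrite -ltnS prednK.
have hpn : (p <= n1)%N by move: hpmin; rewrite leq_min => /andP[].
have hpm : (p <= m1)%N by move: hpmin; rewrite leq_min => /andP[].
have sge : forall j : 'I_p, sig <= s j.
  by move=> j; apply: smono; rewrite -ltnS prednK.
have eps0 : 0 <= eps by apply: le_trans h11; exact: frob_ge0.
have M0 : 0 <= M by apply: le_trans M11; exact: frob_ge0.
set P := U *m sel R n1 p.
set Q := V *m sel R m1 p.
set A := ulsubmx Mstar in eA M11 h11 *.
set D := P^T *m A *m Q.
have DE : D = diag_mx (\row_j s j).
  rewrite /D eA /P /Q !trmx_mul !mulmxA -(mulmxA _ U^T U) UU mulmx1.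
  rewrite -(mulmxA _ V^T V) VV mulmx1.
  apply/matrixP => i j; rewrite (mul_sel_entry _ hpm).
  rewrite -[_ *m rect_diag _ _ _]trmxK trmx_mul trmxK mxE (mul_sel_entry _ hpn) !mxE /=.
  case: (eqVneq i j) => [->|ij]; first by rewrite !eqxx mulr1n.
  by rewrite mulr0n; case: eqP => // e; case/eqP: ij; exact: val_inj.
have sigpos : 0 < sig by [].
have D3 : forall k (Y : 'M[R]_(k, p)), sig * frob_norm Y <= frob_norm (Y *m D).
  move=> k Y; rewrite DE !frobE -(ger0_norm (ltW sigpos)) -sqrtr_sqr -sqrtrM ?sqr_ge0 //.
  apply: ler_wsqrtr; rewrite /fr2 mulr_sumr; apply: ler_sum => i _.
  rewrite mulr_sumr; apply: ler_sum => j _; rewrite mul_mx_diag !mxE.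
  have := sge j; have := ltW sigpos => h1 h2.
  rewrite exprMn mulrC; apply: ler_wpM2l; first exact: sqr_ge0.
  by rewrite lerXn2r // ?nnegrE ?(le_trans h1 h2).
have [Du Dinv] := lowbound_inv sigpos D3.
set Mh := ulsubmx Mhat in h11 *.
set Kh := P^T *m Mh *m Q.
have hE : frob_norm (Kh - D) <= eps.
  rewrite /Kh /D -mulmxBl -mulmxBr.
  apply: le_trans h11; apply: le_trans (frob_contr_l _ UU hpn).
  exact: frob_contr_r.
have sig2 : 0 < sig / 2 by rewrite divr_gt0.
have K3 : forall k (Y : 'M[R]_(k, p)), sig / 2 * frob_norm Y <= frob_norm (Y *m Kh).
  move=> k Y.
  have e1 : Y *m D = Y *m Kh - Y *m (Kh - D) by rewrite mulmxBr opprB addrC subrK.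
  have h1 := D3 _ Y; rewrite e1 in h1.
  have h2 := frobB (Y *m Kh) (Y *m (Kh - D)).
  have h3 := frobM Y (Kh - D).
  have h4 : frob_norm Y * frob_norm (Kh - D) <= frob_norm Y * (sig / 2).
    by apply: ler_wpM2l; [exact: frob_ge0 | exact: le_trans hE he].
  have := frob_ge0 Y; lra.
have [Ku Kinv] := lowbound_inv sig2 K3.
have S1 := @schur_zero _ n1 n2 m1 m2 p Mstar P^T Q (eq_leq rks) Du.
have S2 := @schur_zero _ n1 n2 m1 m2 p Mhat P^T Q rkh Ku.
rewrite -/A -/D in S1; rewrite -/Mh -/Kh in S2.
rewrite S1 S2.
set C := dlsubmx Mstar *m Q; set Ch := dlsubmx Mhat *m Q.
set Rr := P^T *m ursubmx Mstar; set Rh := P^T *m ursubmx Mhat.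
set G := invmx Kh; set H := invmx D.
have hGH : G *m (D - Kh) *m H = G - H.
  by rewrite mulmxBr mulmxBl -mulmxA mulmxV // mulmx1 mulVmx // mul1mx.
have eDelta : Ch *m G *m Rh - C *m H *m Rr =
   (Ch - C) *m G *m Rh + C *m G *m (Rh - Rr) + C *m (G *m (D - Kh) *m H) *m Rr.
  rewrite hGH !mulmxBl !mulmxBr !mulmxA.
  by rewrite !mulmxBl telesc3.
have hsigM : sig <= M.
  have h := D3 _ (1%:M : 'M[R]_p); rewrite mul1mx in h.
  have h1 : 1 <= frob_norm (1%:M : 'M[R]_p).
    by rewrite frobE fr2_1; apply: le_sqrt_of_sqr; rewrite expr1n ler1n.
  have hD : frob_norm D <= M.
    apply: le_trans M11; rewrite /D; apply: le_trans (frob_contr_r _ VV hpm) _.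
    exact: frob_contr_l.
  apply: le_trans hD; apply: le_trans h; rewrite ler_peMr //; exact: ltW.
rewrite eDelta.
set T1 := (Ch - C) *m G *m Rh; set T2 := C *m G *m (Rh - Rr).
set T3 := C *m (G *m (D - Kh) *m H) *m Rr.
have hCh : frob_norm (Ch - C) <= eps.
  by rewrite /Ch /C -mulmxBl; apply: le_trans (frob_contr_r _ VV hpm) h21.
have hC : frob_norm C <= M by apply: le_trans (frob_contr_r _ VV hpm) M21.
have hRr : frob_norm Rr <= M by apply: le_trans (frob_contr_l _ UU hpn) M12.
have hRd : frob_norm (Rh - Rr) <= eps.
  by rewrite /Rh /Rr -mulmxBr; apply: le_trans (frob_contr_l _ UU hpn) h12.
have hRh : frob_norm Rh <= eps + M.
  have -> : Rh = (Rh - Rr) + Rr by rewrite subrK.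
  by apply: le_trans (frobD _ _) _; exact: lerD.
have hDK : frob_norm (D - Kh) <= eps by rewrite -opprB frobN.
clearbody C Ch Rr Rh.
set a := (sig / 2)^-1.
have a0 : 0 <= a by rewrite invr_ge0 ltW.
have si0 : 0 <= sig^-1 by rewrite invr_ge0 ltW.
have t1 : frob_norm T1 <= (a * eps) * (eps + M).
  apply: le_trans (frobM _ _) _; apply: ler_pM; try exact: frob_ge0; last exact: hRh.
  by apply: le_trans (Kinv _ _) _; exact: ler_wpM2l.
have t2 : frob_norm T2 <= (a * M) * eps.
  apply: le_trans (frobM _ _) _; apply: ler_pM; try exact: frob_ge0; last exact: hRd.
  by apply: le_trans (Kinv _ _) _; exact: ler_wpM2l.
have t3 : frob_norm T3 <= (sig^-1 * ((a * M) * eps)) * M.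
  rewrite /T3 !mulmxA.
  apply: le_trans (frobM _ _) _; apply: ler_pM; try exact: frob_ge0; last exact: hRr.
  apply: le_trans (Dinv _ _) _; apply: ler_wpM2l => //.
  apply: le_trans (frobM _ _) _; apply: ler_pM; try exact: frob_ge0; last exact: hDK.
  by apply: le_trans (Kinv _ _) _; exact: ler_wpM2l.
have key := final_arith sigpos hsigM eps0 he.
apply: le_trans (frobD _ _) _; apply: le_trans (lerD (frobD _ _) (lexx _)) _.
apply: le_trans (lerD (lerD t1 t2) t3) _.
have eL : a * eps * (eps + M) + a * M * eps + sig^-1 * (a * M * eps) * M =
  (2*eps*(eps+M)*sig + 2*M*eps*sig + 2*M^+2*eps) / sig ^+ 2.
  by rewrite /a; field; rewrite gt_eqF.
have eR : 8 * eps * (M ^+ 2 / sig ^+ 2) = (8 * eps * M ^+ 2) / sig ^+ 2 by rewrite mulrA.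
rewrite eL eR ler_wpM2r // invr_ge0; exact: sqr_ge0.
Qed.
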